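(* Every transformer with average hard attention (AHA), as defined in the context, can be simulated by $\mathbf{PFO}^2$: each map $\bar w\mapsto H^{(\ell)}(\bar w)$ and the output map $\bar w\mapsto o(\bar w)$ is simulated by $\mathbf{PFO}^2$ over $\bar\Sigma$.
   Context: Fixed precision: $\mathbb{F}$ is a fixed finite set of floating-point values containing $0,1,-1,\infty,-\infty$; every arithmetic operation used below returns a value in $\mathbb{F}$, with conventions $\infty+f=\infty$, $-\infty+f=-\infty$ for $f\ne\mp\infty$; $f\cdot(\pm\infty)=\pm\infty$ for $f>0$ and $=\mp\infty$ for $f<0$; $f/\infty=0$ for finite $f$; $\exp(\infty)=\infty$, $\exp(-\infty)=0$. Under fixed precision the attention weights at any position have at most $N_{\max}=\lfloor \min(1,\max(\mathbb{F}\setminus\{\infty\}))/\min(\mathbb{F}_{>0})\rfloor$ nonzero entries, and a sum of nonnegative elements of $\mathbb{F}$ is determined by how many summands take each value, counted up to a fixed threshold. Given a finite alphabet $\Sigma$ and fresh $\mathrm{EOS}\notin\Sigma$, $\bar\Sigma=\Sigma\cup\{\mathrm{EOS}\}$ and $\bar w=w_1\cdots w_Nw_{N+1}$ with $w_{N+1}=\mathrm{EOS}$. A transformer of width $D$ and depth $L$ (parameters in $\mathbb{F}$) computes $H^{(\ell)}(\bar w)\in\mathbb{F}^{D\times(N+1)}$, $\ell\in\{0,0.5,\dots,L\}$: $H^{(0)}_{:,n}=e(w_n)$; $H^{(\ell+0.5)}=\mathrm{LN}(A^{(\ell)}(H^{(\ell)})+H^{(\ell)})$, $H^{(\ell+1)}=\mathrm{LN}(F^{(\ell)}(H^{(\ell+0.5)})+H^{(\ell+0.5)})$,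 with $\mathrm{LN}$ columnwise layer normalization, $F^{(\ell)}(H)_{:,n}=W^{F2}\mathrm{ReLU}(W^{F1}H_{:,n}+b^{F1})+b^{F2}$, $Q=W^QH,K=W^KH,V=W^VH$, $S_{n,m}=Q_{:,n}\cdot K_{:,m}/\sqrt D$, $A(H)_{:,n}=\sum_{m<n}\alpha_{n,m}V_{:,m}$, and output $o(\bar w)=\theta^\top H^{(L)}_{:,N+1}+b$. With average hard attention the weights are $\alpha_{n,m}=\mathbf{1}[S_{n,m}=\max_{i<n}S_{n,i}]\,/\,\sum_{j<n}\mathbf{1}[S_{n,j}=\max_{i<n}S_{n,i}]$ for $m<n$. $\mathbf{PFO}^2$ over $\Gamma$: formulas in the two variables $x,y$ (re-quantifiable), atomic formulas $\pi_a(z)$ ($a\in\Gamma$) and $z<z'$, closed under $\wedge,\neg$, $\exists y<x:\phi(x,y)$, $\exists x<y:\phi(x,y)$, and, for $\phi(x)$ with only free variable $x$, $\exists x<y:\phi(x)$ and $\exists x:\phi(x)$ (symmetrically in $x,y$); standard semantics. A map $G$ assigning to each $\bar w$ a matrix $G(\bar w)\in\mathbb{F}^{D\times(N+1)}$ is simulated by $\mathbf{PFO}^2$ if for every $d$ and $f\in\mathbb{F}$ there is a $\mathbf{PFO}^2$ formula $\phi(x)$ over $\bar\Sigma$ with one free variable such that for all $w$ and $n\in\{1,\dots,N+1\}$: $G_{d,n}(\bar w)=f$ iff $\bar w,n\models\phi(x)$ (for the scalar $o$, take $n=N+1$). *)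

(* Defs.v *)
From HB Require Import structures.
From mathcomp Require Import all_boot all_order all_algebra.
Set Implicit Arguments. Unset Strict Implicit. Unset Printing Implicit Defensive.
Import Order.TTheory GRing.Theory Num.Theory.

(* Extended rationals: the values a floating-point number can take.          *)
Inductive xr := XFin of rat | XPInf | XNInf.

Definition xr_code (x : xr) : option (option rat) :=
  match x with XFin r => Some (Some r) | XPInf => Some None | XNInf => None end.
Definition xr_decode (o : option (option rat)) : xr :=
  match o with Some (Some r) => XFin r | Some None => XPInf | None => XNInf end.
Lemma xr_codeK : cancel xr_code xr_decode. Proof. by case. Qed.
HB.instance Definition _ := Countable.copy xr (can_type xr_codeK).

Local Open Scope ring_scope.

Definition xle (a b : xr) : bool :=
  match a, b with
  | XNInf, _ => true
  | _, XPInf => true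
  | XFin r, XFin s => r <= s
  | _, _ => false
  end.
Definition xlt (a b : xr) : bool := xle a b && (a != b).

(* Fixed-precision arithmetic: a finite set F of values (given as a finite   *)
(* type with an injective valuation into the extended rationals), the        *)
(* distinguished values, and the F-valued arithmetic operations.  fsum is    *)
(* the (fixed-precision) value of a sum  \sum_i x_i  of elements of F.       *)
Record fparith := FParith {
  fT : finType;
  fval : fT -> xr;
  fzero : fT; fone : fT; fmone : fT; fpinf : fT; fninf : fT;
  fadd : fT -> fT -> fT;
  fmul : fT -> fT -> fT;
  fdiv : fT -> fT -> fT;
  fsqrt : fT -> fT;
  fexp : fT -> fT;
  fsum : seq fT -> fT
}.

Section FP.
Variable A : fparith.
Local Notation F := (fT A).

Definition fle (x y : F) : bool := xle (fval x) (fval y).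
Definition flt (x y : F) : bool := xlt (fval x) (fval y).
Definition isfin (x : F) : bool := if fval x is XFin _ then true else false.
Definition ratv (x : F) : rat := if fval x is XFin r then r else 0.

Definition fsub (x y : F) : F := fadd x (fmul (fmone A) y).
Definition frelu (x : F) : F := if fle x (fzero A) then fzero A else x.
Definition natF (n : nat) : F := fsum (nseq n (fone A)).

Definition fmaxfin : rat := \big[Num.max/(1:rat)]_(x : F | isfin x) ratv x.
Definition fminpos : rat := \big[Num.min/(1:rat)]_(x : F | isfin x && (0 < ratv x)) ratv x.
Definition Nmax : nat := `| Num.floor (Num.min (1:rat) fmaxfin / fminpos) |%N.

Definition aha_ind (s : seq F) (x : F) : F :=
  if all (fun y => fle y x) s then fone A else fzero A.
Definition aha_weights (s : seq F) : seq F :=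
  let den := fsum (map (aha_ind s) s) in
  map (fun x => fdiv (aha_ind s x) den) s.

Record fp_ok : Prop := FPOk {
  fval_inj : injective (@fval A);
  fval_zero : fval (fzero A) = XFin 0;
  fval_one : fval (fone A) = XFin 1;
  fval_mone : fval (fmone A) = XFin (-1);
  fval_pinf : fval (fpinf A) = XPInf;
  fval_ninf : fval (fninf A) = XNInf;
  add_pinf : forall f, f != fninf A -> fadd (fpinf A) f = fpinf A;
  add_ninf : forall f, f != fpinf A -> fadd (fninf A) f = fninf A;
  mul_pos_pinf : forall f, flt (fzero A) f -> fmul f (fpinf A) = fpinf A;
  mul_pos_ninf : forall f, flt (fzero A) f -> fmul f (fninf A) = fninf A;
  mul_neg_pinf : forall f, flt f (fzero A) -> fmul f (fpinf A) = fninf A;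
  mul_neg_ninf : forall f, flt f (fzero A) -> fmul f (fninf A) = fpinf A;
  div_fin_pinf : forall f, isfin f -> fdiv f (fpinf A) = fzero A;
  exp_pinf : fexp (fpinf A) = fpinf A;
  exp_ninf : fexp (fninf A) = fzero A;
  (* 0 * f = 0 (also fixes the unspecified case 0 * (+-oo)) *)
  mul_zero : forall f, fmul (fzero A) f = fzero A;
  fsum_perm : forall s1 s2 : seq F, perm_eq s1 s2 -> fsum s1 = fsum s2;
  fsum_zero : forall s : seq F, fsum (fzero A :: s) = fsum s;
  fsum_threshold : exists T : nat, forall s1 s2 : seq F,
      all (fle (fzero A)) s1 -> all (fle (fzero A)) s2 ->
      (forall f, minn (count_mem f s1) T = minn (count_mem f s2) T) ->
      fsum s1 = fsum s2;
  aha_Nmax : forall s : seq F, (count (fun a => a != fzero A) (aha_weights s) <= Nmax)%N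
}.

Unset Implicit Arguments.
Variable Sigma : finType.

Record layer (D : nat) := Layer {
  WQ : 'I_D -> 'I_D -> F;
  WK : 'I_D -> 'I_D -> F;
  WV : 'I_D -> 'I_D -> F;
  dff : nat;
  WF1 : 'I_dff -> 'I_D -> F;
  bF1 : 'I_dff -> F;
  WF2 : 'I_D -> 'I_dff -> F;
  bF2 : 'I_D -> F;
  ln1_g : 'I_D -> F; ln1_b : 'I_D -> F; ln1_eps : F;
  ln2_g : 'I_D -> F; ln2_b : 'I_D -> F; ln2_eps : F
}.

Arguments WQ {D} l _ _. Arguments WK {D} l _ _. Arguments WV {D} l _ _.
Arguments dff {D} l. Arguments WF1 {D} l _ _. Arguments bF1 {D} l _.
Arguments WF2 {D} l _ _. Arguments bF2 {D} l _.
Arguments ln1_g {D} l _. Arguments ln1_b {D} l _. Arguments ln1_eps {D} l.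
Arguments ln2_g {D} l _. Arguments ln2_b {D} l _. Arguments ln2_eps {D} l.

Record transformer := Transformer {
  tD : nat;
  temb : option Sigma -> 'I_tD -> F;   (* None = EOS *)
  tlayers : seq (layer tD);
  ttheta : 'I_tD -> F;
  tb : F
}.

Arguments tD t : clear implicits. Arguments temb t _ _ : clear implicits.
Arguments tlayers t : clear implicits.
Arguments ttheta t _ : clear implicits. Arguments tb t : clear implicits.

(* columns indexed by positions (0-based) *)
Definition mat (D : nat) := nat -> 'I_D -> F.

Definition mv {p q : nat} (W : 'I_p -> 'I_q -> F) (h : 'I_q -> F) : 'I_p -> F :=
  fun i => fsum [seq fmul (W i j) (h j) | j <- enum 'I_q].
Definition dotF {D : nat} (h g : 'I_D -> F) : F :=
  fsum [seq fmul (h d) (g d) | d <- enum 'I_D].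
Definition addv {D : nat} (x y : 'I_D -> F) : 'I_D -> F := fun d => fadd (x d) (y d).

Definition LN {D : nat} (g b : 'I_D -> F) (eps : F) (x : 'I_D -> F) : 'I_D -> F :=
  let mu := fdiv (fsum [seq x d | d <- enum 'I_D]) (natF D) in
  let xc := fun d => fsub (x d) mu in
  let var := fdiv (fsum [seq fmul (xc d) (xc d) | d <- enum 'I_D]) (natF D) in
  fun d => fadd (fmul (g d) (fdiv (xc d) (fsqrt (fadd var eps)))) (b d).

(* average hard attention, strictly past positions m < n *)
Definition attn {D : nat} (ly : layer D) (H : mat D) (n : nat) : 'I_D -> F :=
  let scores := [seq fdiv (dotF (mv (WQ ly) (H n)) (mv (WK ly) (H m)))
                          (fsqrt (natF D)) | m <- iota 0 n] in
  let alpha := aha_weights scores in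
  fun d => fsum [seq fmul (nth (fzero A) alpha m) (mv (WV ly) (H m) d) | m <- iota 0 n].

Definition ffn {D : nat} (ly : layer D) (h : 'I_D -> F) : 'I_D -> F :=
  fun d => fadd (mv (WF2 ly) (fun k => frelu (fadd (mv (WF1 ly) h k) (bF1 ly k))) d)
                (bF2 ly d).

Definition attn_sub {D : nat} (ly : layer D) (H : mat D) : mat D :=
  fun n => LN (ln1_g ly) (ln1_b ly) (ln1_eps ly) (addv (attn ly H n) (H n)).
Definition ffn_sub {D : nat} (ly : layer D) (H : mat D) : mat D :=
  fun n => LN (ln2_g ly) (ln2_b ly) (ln2_eps ly) (addv (ffn ly (H n)) (H n)).

(* [H^(0); H^(0.5); H^(1); ...; H^(L)] *)
Fixpoint run {D : nat} (ls : seq (layer D)) (H : mat D) : seq (mat D) :=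
  match ls with
  | [::] => [:: H]
  | l :: ls' => let H1 := attn_sub l H in H :: H1 :: run ls' (ffn_sub l H1)
  end.

Definition barw (w : seq Sigma) : seq (option Sigma) := rcons (map Some w) None.

Definition H0 (T : transformer) (w : seq Sigma) : mat (tD T) :=
  fun n => temb T (nth None (barw w) n).

(* Hstate T w k = H^(k/2)(\bar w), for k <= 2L *)
Definition Hstate (T : transformer) (w : seq Sigma) (k : nat) : mat (tD T) :=
  nth (H0 T w) (run (tlayers T) (H0 T w)) k.

(* o(\bar w) = theta^T H^(L)_{:,N+1} + b  (position N+1 is index size w) *)
Definition output (T : transformer) (w : seq Sigma) : F :=
  fadd (fsum [seq fmul (ttheta T d) (Hstate T w (2 * size (tlayers T)) (size w) d)
             | d <- enum 'I_(tD T)]) (tb T).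

End FP.
Arguments barw {Sigma} w.
Arguments H0 {A Sigma} T w _ _.
Arguments Hstate {A Sigma} T w k _ _.
Arguments output {A Sigma} T w.
Arguments tD {A Sigma} t.
Arguments tlayers {A Sigma} t.
Set Implicit Arguments.

Local Close Scope ring_scope.
Inductive var := VX | VY.
Definition other (v : var) : var := if v is VX then VY else VX.
Definition veqb (u v : var) : bool :=
  match u, v with VX, VX | VY, VY => true | _, _ => false end.

Inductive pfo (S : Type) :=
| PSym of S & var
| PLt of var & var
| PAnd of pfo S & pfo S
| PNot of pfo S
| PExLt of var & pfo S           (* PExLt z phi : exists z' < z : phi, z' = other z *)
| PEx of var & pfo S.            (* PEx z phi : exists z : phi   (phi may only have z free) *)

Arguments PLt {S}.

Fixpoint pfo_free (S : Type) (p : pfo S) (v : var) : bool :=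
  match p with
  | PSym _ z => veqb z v
  | PLt z1 z2 => veqb z1 v || veqb z2 v
  | PAnd p q => pfo_free p v || pfo_free q v
  | PNot p => pfo_free p v
  | PExLt z p => veqb z v || (pfo_free p v && ~~ veqb (other z) v)
  | PEx z p => pfo_free p v && ~~ veqb z v
  end.

Fixpoint pfo_wf (S : Type) (p : pfo S) : bool :=
  match p with
  | PSym _ _ | PLt _ _ => true
  | PAnd p q => pfo_wf p && pfo_wf q
  | PNot p => pfo_wf p
  | PExLt _ p => pfo_wf p
  | PEx z p => pfo_wf p && ~~ pfo_free p (other z)
  end.

Definition upd (env : var -> nat) (z : var) (m : nat) : var -> nat :=
  fun v => if veqb v z then m else env v.

(* semantics over a word u (positions 0 .. size u - 1) *)
Fixpoint pfo_sat (S : eqType) (u : seq S) (env : var -> nat) (p : pfo S) : Prop :=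
  match p with
  | PSym a z => env z < size u /\ nth a u (env z) = a
  | PLt z1 z2 => env z1 < env z2
  | PAnd p q => pfo_sat u env p /\ pfo_sat u env q
  | PNot p => ~ pfo_sat u env p
  | PExLt z p => exists m, m < env z /\ pfo_sat u (upd env (other z) m) p
  | PEx z p => exists m, m < size u /\ pfo_sat u (upd env z m) p
  end.

Definition simulated_mat (A : fparith) (Sigma : finType) (D : nat)
    (G : seq Sigma -> mat A D) : Prop :=
  forall (d : 'I_D) (f : fT A), exists phi : pfo (option Sigma),
    pfo_wf phi /\ ~~ pfo_free phi VY /\
    forall (w : seq Sigma) (n : nat), n <= size w ->
      (G w n d = f <-> pfo_sat (barw w) (fun _ => n) phi).

Definition simulated_scalar (A : fparith) (Sigma : finType)
    (G : seq Sigma -> fT A) : Prop :=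
  forall f : fT A, exists phi : pfo (option Sigma),
    pfo_wf phi /\ ~~ pfo_free phi VY /\
    forall w : seq Sigma, (G w = f <-> pfo_sat (barw w) (fun _ => size w) phi).

(* Main.v *)
Require Import Defs.
From mathcomp Require Import all_boot all_order all_algebra.
From mathcomp Require Import zify.
From Stdlib Require Import Classical ClassicalEpsilon FunctionalExtensionality.
Set Implicit Arguments. Unset Strict Implicit.


Section Cnt.
Variable X : finType.

Lemma count_sum (P : pred X) (c : seq X) :
  count P c = \sum_(x | P x) count_mem x c.
Proof.
elim: c => [|a c IH] /=.
  by rewrite big1.
rewrite IH big_split /=; congr (_ + _).
case Pa: (P a).
  rewrite (bigD1 a) //= eqxx big1 // => x /andP [_ /negbTE]; by rewrite eq_sym => ->.
by rewrite big1 // => x Px; case: eqP => // E; rewrite E Px in Pa.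
Qed.

Definition RK (K : nat) (c1 c2 : seq X) :=
  forall x, minn (count_mem x c1) K = minn (count_mem x c2) K.

Lemma RK_count K T (P : pred X) c1 c2 : RK K c1 c2 -> T <= K ->
  minn (count P c1) T = minn (count P c2) T.
Proof.
move=> R TK; rewrite !count_sum.
apply: (big_ind2 (fun a b => minn a T = minn b T)) => //.
  move=> x1 x2 y1 y2 E1 E2; lia.
move=> x _; have := R x; lia.
Qed.

Lemma all_RK K (p : pred X) c1 c2 : RK K c1 c2 -> 0 < K -> all p c1 = all p c2.
Proof.
move=> R K0; have := RK_count (predC p) R K0.
move=> E.
have : has (predC p) c1 = has (predC p) c2.
  rewrite !has_count; apply/idP/idP => H; lia.
by rewrite !has_predC => /negb_inj.
Qed.
End Cnt.

Lemma RK_map (X : finType) (Y : eqType) (f : X -> Y) K T c1 c2 :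
  RK K c1 c2 -> T <= K ->
  forall y, minn (count_mem y (map f c1)) T = minn (count_mem y (map f c2)) T.
Proof. by move=> R TK y; rewrite !count_map; apply: RK_count R TK. Qed.


Section Form.
Variable S : eqType.
Implicit Types (p q : pfo S) (env : var -> nat) (u : seq S).

Fixpoint fswap p : pfo S :=
  match p with
  | PSym a z => PSym a (other z)
  | PLt z1 z2 => PLt (other z1) (other z2)
  | PAnd p q => PAnd (fswap p) (fswap q)
  | PNot p => PNot (fswap p)
  | PExLt z p => PExLt (other z) (fswap p)
  | PEx z p => PEx (other z) (fswap p)
  end.

Lemma veqbC (a b : var) : veqb a b = veqb b a. Proof. by case: a; case: b. Qed.

Lemma sat_ext p u env1 env2 : (forall v, pfo_free p v -> env1 v = env2 v) ->
  (pfo_sat u env1 p <-> pfo_sat u env2 p).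
Proof.
elim: p env1 env2 => [a z|z1 z2|p IHp q IHq|p IHp|z p IHp|z p IHp] env1 env2 E /=.
- by rewrite (E z) //=; case: (z).
- by rewrite (E z1) ?(E z2) //=; case: (z1); case: (z2).
- rewrite (IHp env1 env2) ?(IHq env1 env2) // => v Hv; apply: E => /=; rewrite Hv ?orbT //.
- by rewrite (IHp env1 env2).
- have Ez : env1 z = env2 z by apply: E; case: z.
  rewrite Ez; split=> [[m [Hm Hs]]|[m [Hm Hs]]]; exists m; split => //;
  [rewrite -(IHp (upd env1 (other z) m)) // | rewrite (IHp _ (upd env2 (other z) m)) //];
  move=> v Hv; rewrite /upd; case Ev: (veqb v (other z)) => //;
  apply: E => /=; rewrite Hv [veqb (other z) v]veqbC Ev orbT //.
- split=> [[m [Hm Hs]]|[m [Hm Hs]]]; exists m; split => //;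
  [rewrite -(IHp (upd env1 z m)) // | rewrite (IHp _ (upd env2 z m)) //];
  move=> v Hv; rewrite /upd; case Ev: (veqb v z) => //;
  apply: E => /=; rewrite Hv [veqb z v]veqbC Ev //.
Qed.

Lemma sat_ext1 p u env1 env2 : (forall v, env1 v = env2 v) ->
  pfo_sat u env1 p -> pfo_sat u env2 p.
Proof. by move=> E; rewrite (sat_ext u (env1:=env1) (env2:=env2)). Qed.

Lemma other_veqb v z : veqb (other v) (other z) = veqb v z.
Proof. by case: v; case: z. Qed.
Lemma otherK v : other (other v) = v.
Proof. by case: v. Qed.

Lemma sat_swap p u env :
  pfo_sat u env (fswap p) <-> pfo_sat u (fun v => env (other v)) p.
Proof.
elim: p env => [a z|z1 z2|p IHp q IHq|p IHp|z p IHp|z p IHp] env /=.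
- by [].
- by [].
- by rewrite IHp IHq.
- by rewrite IHp.
- split=> [[m [Hm Hs]]|[m [Hm Hs]]]; exists m; split => //.
    move: Hs; rewrite IHp; apply: sat_ext1 => v.
    by rewrite /upd; destruct v, z.
  rewrite IHp; move: Hs; apply: sat_ext1 => v.
  by rewrite /upd; destruct v, z.
- split=> [[m [Hm Hs]]|[m [Hm Hs]]]; exists m; split => //.
    move: Hs; rewrite IHp; apply: sat_ext1 => v.
    by rewrite /upd; destruct v, z.
  rewrite IHp; move: Hs; apply: sat_ext1 => v.
  by rewrite /upd; destruct v, z.
Qed.

Lemma free_swap p v : pfo_free (fswap p) v = pfo_free p (other v).
Proof.
elim: p v => [a z|z1 z2|p IHp q IHq|p IHp|z p IHp|z p IHp] v /=.
- by case: z; case: v.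
- by case: z1; case: z2; case: v.
- by rewrite IHp IHq.
- by rewrite IHp.
- by rewrite IHp; case: z; case: v.
- by rewrite IHp; case: z; case: v.
Qed.

Lemma wf_swap p : pfo_wf (fswap p) = pfo_wf p.
Proof.
elim: p => [a z|z1 z2|p IHp q IHq|p IHp|z p IHp|z p IHp] //=.
- by rewrite IHp IHq.
- by rewrite IHp free_swap otherK.
Qed.

Definition uni p := pfo_wf p && ~~ pfo_free p VY.
Definition holds u n p := pfo_sat u (fun _ => n) p.

Lemma sat_uni p u env : uni p -> (pfo_sat u env p <-> holds u (env VX) p).
Proof.
move=> /andP [_ H]; apply: sat_ext => v Hv; case: v Hv => //.
by rewrite (negbTE H).
Qed.

Lemma sat_swap_uni p u env : uni p -> (pfo_sat u env (fswap p) <-> holds u (env VY) p).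
Proof. by move=> U; rewrite sat_swap sat_uni. Qed.

Lemma uni_swap_wf p : uni p -> pfo_wf (fswap p).
Proof. by move=> /andP [H _]; rewrite wf_swap. Qed.

Definition ftrue : pfo S := PNot (PLt VX VX).
Definition ffalse : pfo S := PLt VX VX.
Definition por p q : pfo S := PNot (PAnd (PNot p) (PNot q)).

Lemma uni_true : uni ftrue. Proof. by []. Qed.
Lemma uni_false : uni ffalse. Proof. by []. Qed.
Lemma uni_and p q : uni p -> uni q -> uni (PAnd p q).
Proof. by rewrite /uni /= => /andP [-> /negbTE ->] /andP [-> /negbTE ->]. Qed.
Lemma uni_not p : uni p -> uni (PNot p). Proof. by []. Qed.
Lemma uni_or p q : uni p -> uni q -> uni (por p q).
Proof. by rewrite /uni /= => /andP [-> /negbTE ->] /andP [-> /negbTE ->]. Qed.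

Lemma sat_or u env p q : pfo_sat u env (por p q) <-> pfo_sat u env p \/ pfo_sat u env q.
Proof. simpl; tauto. Qed.

Lemma bigor_ex (I : eqType) (l : seq I) (Q : I -> Prop) (phi : I -> pfo S) :
  (forall i, uni (phi i)) -> exists psi, uni psi /\ forall u env,
    (pfo_sat u env psi <-> exists i, i \in l /\ Q i /\ pfo_sat u env (phi i)).
Proof.
move=> U; elim: l => [|i l [psi [Upsi IH]]].
  exists ffalse; split => // u env; split => /=; [lia|by case=> i; rewrite in_nil; case].
case: (classic (Q i)) => Qi.
  exists (por (phi i) psi); split; first by apply: uni_or.
  move=> u env; rewrite sat_or IH; split.
    case=> [H|[j [jl [Qj Hj]]]]; first by exists i; rewrite mem_head.
    by exists j; rewrite in_cons jl orbT.
  case=> j [jl [Qj Hj]]; move: jl; rewrite in_cons => /orP [/eqP E|jl]; first by left; rewrite -E.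
  by right; exists j.
exists psi; split => // u env; rewrite IH; split.
  by case=> j [jl [Qj Hj]]; exists j; rewrite in_cons jl orbT.
case=> j [jl [Qj Hj]]; move: jl; rewrite in_cons => /orP [/eqP E|jl]; first by rewrite E in Qj.
by exists j.
Qed.

Lemma bigand_ex (I : eqType) (l : seq I) (phi : I -> pfo S) :
  (forall i, uni (phi i)) -> exists psi, uni psi /\ forall u env,
    (pfo_sat u env psi <-> forall i, i \in l -> pfo_sat u env (phi i)).
Proof.
move=> U; elim: l => [|i l [psi [Upsi IH]]].
  by exists ftrue; split => // u env; split => //= _; lia.
exists (PAnd (phi i) psi); split; first by apply: uni_and.
move=> u env /=; rewrite IH; split.
  by case=> H1 H2 j; rewrite in_cons => /orP [/eqP ->|]; auto.
by move=> H; split; [apply: H; rewrite mem_head | move=> j jl; apply: H; rewrite in_cons jl orbT].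
Qed.

Fixpoint atl (Q : pfo S) (k : nat) : pfo S :=
  match k with
  | 0 => ftrue
  | k'.+1 => PExLt VX (PAnd (fswap Q) (fswap (atl Q k')))
  end.

Lemma uni_atl Q k : uni Q -> uni (atl Q k).
Proof.
move=> UQ; elim: k => [|k IH] //.
by rewrite /uni /= (uni_swap_wf UQ) (uni_swap_wf IH) andbF.
Qed.

Lemma count_iota_ex (p : pred nat) k n :
  (exists m, m < n /\ p m /\ k <= count p (iota 0 m)) <-> k < count p (iota 0 n).
Proof.
elim: n => [|n IH]; first by split; [case=> m; lia|].
rewrite -addn1 iotaD count_cat /= addn0 add0n; split.
  case=> m [mn [pm km]]; case: (ltnP m n) => mn'.
    have : k < count p (iota 0 n) by apply/IH; exists m.
    lia.
  have E : m = n by lia. rewrite E in pm km.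
  by move: pm km; case: (p n) => //; lia.
move=> H; case: (ltnP k (count p (iota 0 n))) => H2.
  by case/IH: H2 => m [? [? ?]]; exists m; split => //; lia.
exists n; split => //; move: H H2; case: (p n) => /=; lia.
Qed.

Lemma holds_atl Q u N (p : pred nat) : uni Q ->
  (forall m, m < N -> (holds u m Q <-> p m)) ->
  forall k n, n <= N -> (holds u n (atl Q k) <-> k <= count p (iota 0 n)).
Proof.
move=> UQ HQ; elim => [|k IH] n nN.
  by rewrite /holds /=; split => // _; lia.
rewrite /holds /= -count_iota_ex; split.
  case=> m [mn [H1 H2]]; exists m; split => //.
  move: H1 H2; rewrite !sat_swap_uni ?uni_atl //= /upd /= => H1 H2.
  by split; [apply/HQ => //; lia | apply/IH => //; lia].
case=> m [mn [H1 H2]]; exists m; split => //.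
rewrite !sat_swap_uni ?uni_atl //= /upd /=.
by split; [apply/HQ => //; lia | apply/IH => //; lia].
Qed.

Definition exact (Q : pfo S) (k K : nat) : pfo S :=
  PAnd (atl Q k) (if k < K then PNot (atl Q k.+1) else ftrue).

Lemma uni_exact Q k K : uni Q -> uni (exact Q k K).
Proof.
move=> UQ; apply: uni_and; first by apply: uni_atl.
by case: ifP => _ //; apply: uni_not; apply: uni_atl.
Qed.

Lemma holds_exact Q u N (p : pred nat) k K : uni Q -> k <= K ->
  (forall m, m < N -> (holds u m Q <-> p m)) ->
  forall n, n <= N -> (holds u n (exact Q k K) <-> minn (count p (iota 0 n)) K = k).
Proof.
move=> UQ kK HQ n nN.
have H1 := holds_atl UQ HQ k nN. have H2 := holds_atl UQ HQ k.+1 nN.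
rewrite /holds in H1 H2 *; rewrite /exact; case: ifP => kK'; cbn [pfo_sat]; rewrite H1.
  rewrite H2; split.
    by case=> A B; have : ~ k < count p (iota 0 n) by []; lia.
  move=> E; split; lia.
split; [case=> A B|move=> E; split => //=]; lia.
Qed.
End Form.


Section Det.
Variable A : fparith.
Variable Sigma : finType.
Local Notation F := (fT A).
Local Notation I D K := ({ffun 'I_D -> fT A} * {ffun {ffun 'I_D -> fT A} -> 'I_K.+1})%type.

Definition tof D (h : 'I_D -> F) : {ffun 'I_D -> F} := [ffun d => h d].

Definition colsim D (G : seq Sigma -> mat A D) :=
  forall h : {ffun 'I_D -> F}, exists phi : pfo (option Sigma), uni phi /\
    forall w n, n <= size w -> ((forall d, G w n d = h d) <-> holds (barw w) n phi).

Definition cols D (G : seq Sigma -> mat A D) w n := [seq tof (G w m) | m <- iota 0 n].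

Lemma tof_eq D (h : 'I_D -> F) g : (tof h == g) = [forall d, h d == g d].
Proof.
apply/eqP/forallP => [<- d|H]; first by rewrite ffunE.
by apply/ffunP => d; rewrite ffunE; apply/eqP.
Qed.

Lemma det D (G V : seq Sigma -> mat A D) K : colsim G ->
  (forall w n w' n', n <= size w -> n' <= size w' -> (forall d, G w n d = G w' n' d) ->
     RK K (cols G w n) (cols G w' n') -> forall d, V w n d = V w' n' d) ->
  colsim V.
Proof.
move=> CG Inv h'.
pose phiG g := proj1_sig (constructive_indefinite_description _ (CG g)).
have phiGs g : uni (phiG g) /\ forall w n, n <= size w ->
    ((forall d, G w n d = g d) <-> holds (barw w) n (phiG g)).
  exact: (proj2_sig (constructive_indefinite_description _ (CG g))).
have holdsG w n g : n <= size w -> (holds (barw w) n (phiG g) <-> tof (G w n) == g).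
  move=> nw; rewrite -(proj2 (phiGs g) w n nw) tof_eq; split => [H|/forallP H d].
    by apply/forallP => d; rewrite H.
  by apply/eqP.
have Ex (i : I D K) : exists psi, uni psi /\ forall u env,
    (pfo_sat u env psi <-> forall g, g \in enum {ffun 'I_D -> F} ->
       pfo_sat u env (exact (phiG g) (i.2 g) K)).
  apply: bigand_ex => g; apply: uni_exact; exact: (proj1 (phiGs g)).
pose chi (i : I D K) := PAnd (phiG i.1) (proj1_sig (constructive_indefinite_description _ (Ex i))).
have chis (i : I D K) : uni (chi i) /\ forall u env,
    (pfo_sat u env (chi i) <-> pfo_sat u env (phiG i.1) /\ forall g,
       pfo_sat u env (exact (phiG g) (i.2 g) K)).
  have [U Hs] := proj2_sig (constructive_indefinite_description _ (Ex i)).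
  split; first by apply: uni_and => //; exact: (proj1 (phiGs _)).
  move=> u env /=; rewrite Hs; split; case=> H1 H2; split => // g.
    by apply: H2; rewrite mem_enum.
  by move=> _; apply: H2.
have holdsChi (i : I D K) w n : n <= size w -> (holds (barw w) n (chi i) <->
    tof (G w n) = i.1 /\ forall g, minn (count_mem g (cols G w n)) K = i.2 g).
  move=> nw; rewrite /holds (proj2 (chis i)) -/(holds _ _ _) holdsG //.
  split; case=> /eqP H1 H2; split => // g.
    move: (H2 g); rewrite -/(holds _ _ _) (holds_exact (N := n) (p := fun m => tof (G w m) == g)).
    - by rewrite /cols count_map.
    - exact: (proj1 (phiGs g)).
    - by rewrite -ltnS.
    - move=> m mn; apply: holdsG; lia.
    - by [].
  rewrite -/(holds _ _ _) (holds_exact (N := n) (p := fun m => tof (G w m) == g)).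
  - by rewrite -H2 /cols count_map.
  - exact: (proj1 (phiGs g)).
  - by rewrite -ltnS.
  - move=> m mn; apply: holdsG; lia.
  - by [].
pose Q (i : I D K) := exists w n, n <= size w /\ tof (G w n) = i.1 /\
   (forall g, minn (count_mem g (cols G w n)) K = i.2 g) /\ forall d, V w n d = h' d.
have [psi [Upsi Hpsi]] := bigor_ex (enum {: I D K}) Q (fun i => (proj1 (chis i))).
exists psi; split => // w n nw; rewrite /holds Hpsi; split.
  move=> HV.
  pose c : {ffun {ffun 'I_D -> F} -> 'I_K.+1} := [ffun g => inord (minn (count_mem g (cols G w n)) K)].
  exists (tof (G w n), c); split; first by rewrite mem_enum.
  have cE g : minn (count_mem g (cols G w n)) K = c g.
    by rewrite ffunE inordK // ltnS geq_minr.
  split; first by exists w, n.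
  by rewrite -/(holds _ _ _) holdsChi.
case=> i [_ [[w0 [n0 [nw0 [E1 [E2 E3]]]]]]]; rewrite -/(holds _ _ _) holdsChi //.
case=> E1' E2' d; rewrite -E3; apply: Inv => //.
  by move=> d'; have := congr1 (fun f : {ffun 'I_D -> F} => f d') (etrans E1' (esym E1)); rewrite !ffunE.
by move=> g; rewrite E2 E2'.
Qed.
End Det.


Section Att.
Variable A : fparith.
Hypothesis HA : fp_ok A.
Local Notation F := (fT A).
Variable T : nat.
Hypothesis HT : forall s1 s2 : seq F,
      all (fle (fzero A)) s1 -> all (fle (fzero A)) s2 ->
      (forall f, minn (count_mem f s1) T = minn (count_mem f s2) T) ->
      fsum s1 = fsum s2.

Lemma tofK D (h : 'I_D -> F) : fun_of_fin (tof h) = h.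
Proof. by apply: functional_extensionality => d; rewrite ffunE. Qed.

Lemma fsum_zeros (s t : seq F) : fsum ([seq x <- s | x == fzero A] ++ t) = fsum t.
Proof.
elim: s => [|a s IH] //=; case: eqP => // ->.
by rewrite cat_cons (fsum_zero HA).
Qed.

Lemma fsum_nz (s : seq F) : fsum s = fsum [seq x <- s | x != fzero A].
Proof.
rewrite -{1}(fsum_perm HA (permEl (perm_filterC (pred1 (fzero A)) s))).
exact: fsum_zeros.
Qed.

Lemma fsum_eqK N (s1 s2 : seq F) :
  (forall v, minn (count_mem v s1) N.+1 = minn (count_mem v s2) N.+1) ->
  count (fun x => x != fzero A) s1 <= N -> count (fun x => x != fzero A) s2 <= N ->
  fsum s1 = fsum s2.
Proof.
move=> E C1 C2; rewrite fsum_nz (fsum_nz s2); apply: (fsum_perm HA).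
apply/allP => v _; apply/eqP; rewrite !count_filter.
case: (eqVneq v (fzero A)) => [->|vz].
  rewrite !(@eq_count _ _ pred0) ?count_pred0 // => x /=; by case: eqP => // ->; rewrite eqxx.
rewrite !(@eq_count _ _ (pred1 v)); last first.
- by move=> x /=; case: eqP => // ->; rewrite vz.
- by move=> x /=; case: eqP => // ->; rewrite vz.
have L1 : count_mem v s1 <= N.
  apply: leq_trans C1; apply: sub_count => x /= /eqP ->; exact: vz.
have L2 : count_mem v s2 <= N.
  apply: leq_trans C2; apply: sub_count => x /= /eqP ->; exact: vz.
have := E v; lia.
Qed.

Definition scf D (ly : layer A D) (hn g : 'I_D -> F) :=
  fdiv (dotF A (mv A (WQ A D ly) hn) (mv A (WK A D ly) g)) (fsqrt (natF A D)).

Definition attnC D (ly : layer A D) (hn : 'I_D -> F) (c : seq {ffun 'I_D -> F}) (d : 'I_D) :=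
  let Sc := [seq scf ly hn (fun_of_fin g) | g <- c] in
  let den := fsum (map (aha_ind Sc) Sc) in
  fsum [seq fmul (fdiv (aha_ind Sc (scf ly hn (fun_of_fin g))) den) (mv A (WV A D ly) (fun_of_fin g) d) | g <- c].

Lemma attn_repr D (ly : layer A D) (H : mat A D) n d :
  attn A ly H n d = attnC ly (H n) [seq tof (H m) | m <- iota 0 n] d.
Proof.
have E : [seq scf ly (H n) (fun_of_fin g) | g <- [seq tof (H m) | m <- iota 0 n]] =
         [seq scf ly (H n) (H m) | m <- iota 0 n].
  by rewrite -map_comp; apply: eq_map => m /=; rewrite tofK.
rewrite /attnC E /attn /aha_weights /= -[in RHS]map_comp; congr fsum.
apply/eq_in_map => m; rewrite mem_iota => /andP [_ mn] /=.
rewrite (nth_map (fzero A)) ?size_map ?size_iota //.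
by rewrite (nth_map 0) ?size_iota // nth_iota // add0n tofK.
Qed.

Lemma attnC_inv D (ly : layer A D) hn c c' K d :
  (Nmax A).+1 <= K -> T <= K -> RK K c c' -> attnC ly hn c d = attnC ly hn c' d.
Proof.
move=> KN KT R.
have K0 : 0 < K by apply: leq_trans KN.
rewrite /attnC.
set Sc := [seq scf ly hn (fun_of_fin g) | g <- c]; set Sc' := [seq scf ly hn (fun_of_fin g) | g <- c'].
have Eind' : aha_ind Sc = aha_ind Sc'.
  apply: functional_extensionality => x.
  by rewrite /aha_ind /Sc /Sc' !all_map (all_RK _ R K0).
have Eden : fsum (map (aha_ind Sc) Sc) = fsum (map (aha_ind Sc') Sc').
  rewrite -Eind' {2}/Sc /Sc' -!map_comp; apply: HT.
  - rewrite all_map; apply/allP => g _ /=; rewrite /aha_ind /fle.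
    by case: ifP => _; rewrite (fval_zero HA) ?(fval_one HA).
  - rewrite all_map; apply/allP => g _ /=; rewrite /aha_ind /fle.
    by case: ifP => _; rewrite (fval_zero HA) ?(fval_one HA).
  - exact: RK_map R KT.
rewrite -Eden -Eind'.
apply: (@fsum_eqK (Nmax A)).
- exact: RK_map R KN.
- have := aha_Nmax HA Sc; rewrite /aha_weights /= {2}/Sc -map_comp !count_map => L.
  apply: leq_trans L; apply: sub_count => g /=; apply: contraNN => /eqP ->.
  by rewrite (mul_zero HA).
- have := aha_Nmax HA Sc'; rewrite /aha_weights /= -Eden -Eind' /Sc' -map_comp !count_map => L.
  apply: leq_trans L; apply: sub_count => g /=; apply: contraNN => /eqP ->.
  by rewrite (mul_zero HA).
Qed.
End Att.


Section Main.
Variable A : fparith.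
Variable Sigma : finType.
Hypothesis HA : fp_ok A.
Local Notation F := (fT A).

Lemma colsim_H0 (Tr : transformer A Sigma) : colsim (fun w => H0 Tr w).
Proof.
move=> h.
have [psi [U Hp]] := @bigor_ex _ _ (enum {: option Sigma})
  (fun a => forall d, temb A Sigma Tr a d = h d) (fun a => PSym a VX) (fun a => isT).
exists psi; split => // w n nw; rewrite /holds Hp.
have Hn : n < size (barw w) by rewrite /barw size_rcons size_map.
split.
  move=> E; exists (nth None (barw w) n); split; first by rewrite mem_enum.
  split; first exact: E.
  by split => //=; apply: set_nth_default.
case=> a [_ [Qa [_ Na]]] d; rewrite -Qa /H0.
have Na' : nth None (barw w) n = a by rewrite (set_nth_default a).
by rewrite Na'.
Qed.

Lemma colsim_ffn D (ly : layer A D) (G : seq Sigma -> mat A D) :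
  colsim G -> colsim (fun w => ffn_sub A ly (G w)).
Proof.
move=> CG; apply: (det (K:=1) CG) => w n w' n' _ _ E _ d.
have E' : G w n = G w' n' by apply: functional_extensionality.
by rewrite /ffn_sub E'.
Qed.

Lemma colsim_attn D (ly : layer A D) (G : seq Sigma -> mat A D) :
  colsim G -> colsim (fun w => attn_sub A ly (G w)).
Proof.
have [T HT] := fsum_threshold HA.
move=> CG; apply: (det (K:=maxn T (Nmax A).+1) CG) => w n w' n' _ _ E R d.
have E' : G w n = G w' n' by apply: functional_extensionality.
have Ea : attn A ly (G w) n = attn A ly (G w') n'.
  apply: functional_extensionality => d'; rewrite !attn_repr E'.
  apply: (@attnC_inv A HA T HT D ly _ _ _ (maxn T (Nmax A).+1)) => //; rewrite ?leq_maxl ?leq_maxr //.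
by rewrite /attn_sub /= Ea E'.
Qed.

Lemma size_run D (ls : seq (layer A D)) H : size (run A ls H) = (2 * size ls).+1.
Proof. elim: ls H => [|l ls IH] H //=; rewrite IH; lia. Qed.

Lemma colsim_run D (ls : seq (layer A D)) (G : seq Sigma -> mat A D) :
  colsim G -> forall k, k <= 2 * size ls ->
  colsim (fun w => nth (G w) (run A ls (G w)) k).
Proof.
elim: ls G => [|l ls IH] G CG k hk.
  by have -> : k = 0 by move: hk; rewrite /= ; lia.
case: k hk => [|[|k]] hk; first exact: CG.
  exact: colsim_attn.
have E : (fun w => nth (G w) (run A (l :: ls) (G w)) k.+2) =
   (fun w => nth (ffn_sub A l (attn_sub A l (G w)))
                  (run A ls (ffn_sub A l (attn_sub A l (G w)))) k).
  apply: functional_extensionality => w /=; apply: set_nth_default.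
  rewrite size_run; move: hk => /=; lia.
rewrite E; apply: IH; first by apply: colsim_ffn; apply: colsim_attn.
move: hk => /=; lia.
Qed.

Lemma colsim_sim D (G : seq Sigma -> mat A D) : colsim G -> simulated_mat G.
Proof.
move=> CG d f.
pose phiG g := proj1_sig (constructive_indefinite_description _ (CG g)).
have phiGs g : uni (phiG g) /\ forall w n, n <= size w ->
    ((forall d, G w n d = g d) <-> holds (barw w) n (phiG g)).
  exact: (proj2_sig (constructive_indefinite_description _ (CG g))).
have [psi [U Hp]] := @bigor_ex _ _ (enum {: {ffun 'I_D -> F}}) (fun g => g d = f) phiG
   (fun g => proj1 (phiGs g)).
exists psi; move/andP: U => [U1 U2]; split => //; split => // w n nw.
rewrite Hp; split.
  move=> E; exists (tof (G w n)); split; first by rewrite mem_enum.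
  split; first by rewrite ffunE.
  by rewrite -/(holds _ _ _) -(proj2 (phiGs _)) // => d'; rewrite ffunE.
case=> g [_ [Qg Hg]]; move: Hg; rewrite -/(holds _ _ _) -(proj2 (phiGs _)) // => Hg.
by rewrite Hg.
Qed.
End Main.

Theorem mainTheorem15 (A : fparith) (Sigma : finType) (HA : fp_ok A)
    (T : transformer A Sigma) :
  (forall k : nat, k <= 2 * size (tlayers T) ->
     simulated_mat (fun w => Hstate T w k)) /\
  simulated_scalar (output T).
Proof.
have CR k (hk : k <= 2 * size (tlayers T)) : colsim (fun w => Hstate T w k).
  exact (colsim_run HA (@colsim_H0 A Sigma T) hk).
split; first by move=> k hk; apply: colsim_sim; apply: CR.
move=> f.
have CL := CR _ (leqnn _).
pose phiG g := proj1_sig (constructive_indefinite_description _ (CL g)).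
have phiGs g : uni (phiG g) /\ forall w n, n <= size w ->
    ((forall d, Hstate T w (2 * size (tlayers T)) n d = g d) <-> holds (barw w) n (phiG g)).
  exact: (proj2_sig (constructive_indefinite_description _ (CL g))).
have [psi [U Hp]] := @bigor_ex _ _ (enum {: {ffun 'I_(tD T) -> fT A}})
  (fun g => forall w, (forall d, Hstate T w (2 * size (tlayers T)) (size w) d = g d) -> output T w = f)
  phiG (fun g => proj1 (phiGs g)).
exists psi; move/andP: U => [U1 U2]; split => //; split => // w.
rewrite Hp; split.
  move=> E; exists (tof (Hstate T w (2 * size (tlayers T)) (size w))); split; first by rewrite mem_enum.
  split.
    move=> w' Hw'; rewrite -E.
    have E' : Hstate T w' (2 * size (tlayers T)) (size w') = Hstate T w (2 * size (tlayers T)) (size w).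
      by apply: functional_extensionality => d; rewrite Hw' ffunE.
    by rewrite /output E'.
  by rewrite -/(holds _ _ _) -(proj2 (phiGs _)) // => d'; rewrite ffunE.
case=> g [_ [Qg Hg]]; move: Hg; rewrite -/(holds _ _ _) -(proj2 (phiGs _)) // => Hg.
by apply: Qg.
Qed.
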